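(* Let $f$ be a nontrivial permutation of $\mathbb{F}_q$ whose disjoint cycle decomposition has $t\ge1$ cycles of lengths $s_1,\dots,s_t\ge2$, and let $s:=\sum_{i=1}^t s_i$ and $k:=s+t$. Then $f$ (as a function $\mathbb{F}_q\to\mathbb{F}_q$) can be written as a composition $$f=\mu(x)\circ x^{q-2}\circ(x-a_k)\circ x^{q-2}\circ(x-a_{k-1})\circ\cdots\circ x^{q-2}\circ(x-a_1)$$ with $a_1,\dots,a_k\in\mathbb{F}_q$ and $\mu\in\mathbb{F}_q[x]$ a polynomial of degree one; i.e. $f$ is a composition of $k$ copies of $x^{q-2}$ and $k+1$ degree-one polynomials over $\mathbb{F}_q$. In particular every permutation of $\mathbb{F}_q$ is a composition of $x^{q-2}$ and degree-one polynomials over $\mathbb{F}_q$.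
   Context: Let $q>2$ be a prime power and $\mathbb{F}_q$ the field with $q$ elements. On $\mathbb{F}_q$, $x^{q-2}$ is the map $c\mapsto c^{q-2}$ (so $0\mapsto0$ and $c\mapsto c^{-1}$ for $c\neq0$). Composition is $(f\circ g)(x)=f(g(x))$. *)

(* Defs.v *)
From HB Require Import structures.
From mathcomp Require Import all_boot all_order all_algebra all_fingroup all_field.
Set Implicit Arguments. Unset Strict Implicit. Unset Printing Implicit Defensive.
Import GRing.Theory.
Local Open Scope ring_scope.

Definition powqm2 (F : finFieldType) (c : F) : F := c ^+ (#|F| - 2)%N.

(* For a = [:: a_1; ...; a_k], chain a = x^(q-2) o (x - a_k) o ... o x^(q-2) o (x - a_1);
   a_1 is applied first. *)
Definition inv_chain (F : finFieldType) (a : seq F) (x : F) : F :=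
  foldl (fun y ai => powqm2 (y - ai)) x a.

Definition nontriv_cycles (T : finType) (f : {perm T}) : {set {set T}} :=
  [set C in porbits f | (1 < #|C|)%N].

(* Main.v *)
Require Import Defs.
From HB Require Import structures.
From mathcomp Require Import all_boot all_order all_algebra all_fingroup all_field.
From mathcomp Require Import ring zify.
Import GRing.Theory.
Local Open Scope ring_scope.

Lemma powqm2E (F : finFieldType) (c : F) : (2 < #|F|)%N -> powqm2 c = c^-1.
Proof.
move=> hq; rewrite /powqm2.
have [->|c0] := eqVneq c 0.
  rewrite invr0 expr0n; have ->: (#|F| - 2 == 0)%N = false by lia. by [].
apply: (mulIf c0); rewrite mulVf // -exprSr.
have e: ((#|F| - 2).+1 = #|F|.-1)%N by lia.
rewrite e; apply: (mulIf c0); rewrite mul1r -exprSr prednK ?expf_card //; lia.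
Qed.

Lemma inv_chain_cons (F : finFieldType) b (a : seq F) x :
  inv_chain (b :: a) x = inv_chain a (powqm2 (x - b)).
Proof. by []. Qed.

Lemma chain_affine (F : finFieldType) (a : seq F) : (2 < #|F|)%N ->
  forall al be, al != 0 -> exists a' al' be', size a' = size a /\ al' != 0 /\
   forall y, inv_chain a (al * y + be) = al' * inv_chain a' y + be'.
Proof.
move=> hq; elim: a => [|b a IH] al be al0.
  by exists [::], al, be.
have al0' : al^-1 != 0 by rewrite invr_eq0.
have [a' [al' [be' [sz [h0 h]]]]] := IH _ 0 al0'.
exists ((b - be) / al :: a'), al', be'; split; first by rewrite /= sz.
split=> // y; rewrite !inv_chain_cons !powqm2E //.
rewrite -h addr0; congr inv_chain.
have ->: al * y + be - b = al * (y - (b - be) / al) by field.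
by rewrite invfM.
Qed.

Definition Srep (F : finFieldType) (k : nat) (phi : F -> F) :=
  exists (a : seq F) (al be : F), size a = k /\ al != 0 /\
    forall y, phi y = al * inv_chain a y + be.

Arguments Srep {F}.
Lemma Srep_id (F : finFieldType) : Srep 0 (@id F).
Proof. by exists [::], 1, 0; split=> //; split=> [|y]; rewrite ?oner_eq0 // mul1r addr0. Qed.

Lemma Srep_comp (F : finFieldType) j k (phi psi : F -> F) : (2 < #|F|)%N ->
  Srep j phi -> Srep k psi -> Srep (k + j) (fun y => phi (psi y)).
Proof.
move=> hq [a1 [al1 [be1 [s1 [n1 h1]]]]] [a2 [al2 [be2 [s2 [n2 h2]]]]].
have [a' [al' [be' [sz [n' h']]]]] := @chain_affine F a1 hq al2 be2 n2.
exists (a2 ++ a'), (al1 * al'), (al1 * be' + be1); split.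
  by rewrite size_cat sz s1 s2.
split; first by rewrite mulf_neq0.
move=> y; rewrite h1 h2 h' /inv_chain foldl_cat -/(inv_chain a2 y) -/(inv_chain a' _).
ring.
Qed.

Lemma Srep_ext (F : finFieldType) k (phi psi : F -> F) :
  (forall y, phi y = psi y) -> Srep k phi -> Srep k psi.
Proof. move=> e [a [al [be [s [n h]]]]]; exists a, al, be; split=> //; split=> // y; by rewrite -e h. Qed.

Definition mobf (F : fieldType) (a b c d : F) (p : option F) : option F :=
  match p with
  | Some x => if c * x + d == 0 then None else Some ((a * x + b) / (c * x + d))
  | None => if c == 0 then None else Some (a / c)
  end.
Arguments mobf {F}.

Lemma mob_comp (F : fieldType) (a b c d e : F) p : a * d - b * c != 0 ->
  mobf 0 1 1 (- e) (mobf a b c d p) = mobf c d (a - e * c) (b - e * d) p.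
Proof.
move=> det; case: p => [x|] /=.
  have [h|h] := eqVneq (c * x + d) 0.
    rewrite /= oner_eq0 mul0r.
    have ->: (a - e * c) * x + (b - e * d) = a * x + b - e * (c * x + d) by ring.
    rewrite h mulr0 subr0.
    have -> : (a * x + b == 0) = false.
      apply/negbTE; apply: contra det => /eqP h2.
      have ->: a * d - b * c = (a * x + b) * (- c) + (c * x + d) * a by ring.
      by rewrite h h2; apply/eqP; ring.
    by rewrite mul0r.
  rewrite /= mul0r add0r mul1r.
  have E : (a - e * c) * x + (b - e * d) = ((a * x + b) / (c * x + d) - e) * (c * x + d).
    by field.
  rewrite E mulf_eq0 (negbTE h) orbF.
  case: eqP => // h3; congr Some; by rewrite invfM mulrCA divff // mulr1 mul1r.
have [c0|h] := eqVneq c 0.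
  rewrite c0 in det *; rewrite /= oner_eq0 mul0r mulr0 subr0.
  have -> : (a == 0) = false.
    by apply/negbTE; apply: contra det => /eqP ->; apply/eqP; ring.
  by rewrite mul0r.
rewrite /= mul0r add0r mul1r.
have E : a - e * c = (a / c - e) * c by field.
rewrite E mulf_eq0 (negbTE h) orbF.
case: eqP => // h3; congr Some; by rewrite invfM mulrCA divff // mulr1 mul1r.
Qed.

Definition ghat (F : fieldType) (e : F) (z : option F) := omap (fun y => (y - e)^-1) z.
Arguments ghat {F}.

Definition tau (F : fieldType) (u v : option F) (z : option F) :=
  if z == u then v else if z == v then u else z.
Arguments tau {F}.

Lemma ghatE (F : fieldType) (e : F) z :
  ghat e z = mobf 0 1 1 (- e) (tau (Some e) None z).
Proof.
rewrite /tau; case: z => [y|] /=.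
  have [->|h] := eqVneq y e.
    by rewrite eqxx /= oner_eq0 subrr invr0 mul0r.
  have -> : (Some y == Some e) = false by apply/eqP => -[]; apply/eqP.
  rewrite /= mul1r mul0r add0r.
  have -> : (y - e == 0) = false by rewrite subr_eq0; apply/negbTE.
  by rewrite mul1r.
by rewrite /= mul1r subrr eqxx.
Qed.

Definition W (F : finFieldType) (a : seq F) (p : option F) := omap (inv_chain a) p.
Arguments W {F}.

Lemma W_rcons (F : finFieldType) (a : seq F) b p : (2 < #|F|)%N ->
  W (rcons a b) p = ghat b (W a p).
Proof.
move=> hq; case: p => [x|] //=.
by rewrite /inv_chain foldl_rcons -/(inv_chain a x) powqm2E.
Qed.

Lemma inv_chain_inj (F : finFieldType) (a : seq F) : (2 < #|F|)%N -> injective (inv_chain a).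
Proof.
move=> hq; elim: a => [|b a IH] x y //= /IH.
rewrite !powqm2E // => /invr_inj /eqP; rewrite (inj_eq (addIr _)) => /eqP.
done.
Qed.

Lemma W_inj (F : finFieldType) (a : seq F) : (2 < #|F|)%N -> injective (W a).
Proof.
move=> hq [x|] [y|] //= [] /(@inv_chain_inj F a hq) -> //.
Qed.

Lemma step (F : finFieldType) (a : seq F) (al be ga de : F)
  (rho : option F -> option F) (p0 : F) : (2 < #|F|)%N ->
  al * de - be * ga != 0 ->
  (forall p, W a p = mobf al be ga de (rho p)) ->
  rho None != rho (Some p0) ->
  forall p, W (rcons a (inv_chain a p0)) p =
    mobf ga de (al - inv_chain a p0 * ga) (be - inv_chain a p0 * de)
      (tau (rho None) (rho (Some p0)) (rho p)).
Proof.
move=> hq det hW huv p.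
rewrite W_rcons // ghatE -mob_comp //; congr mobf.
set b := inv_chain a p0.
have Mu : mobf al be ga de (rho None) = None by rewrite -hW.
have Mv : mobf al be ga de (rho (Some p0)) = Some b by rewrite -hW.
rewrite /tau.
have [qu|qu] := eqVneq (rho p) (rho None).
  by rewrite hW qu Mu Mv eqxx.
have [qv|qv] := eqVneq (rho p) (rho (Some p0)).
  by rewrite hW qv Mv eqxx Mu.
rewrite -hW.
have -> : (W a p == Some b) = false.
  apply/negbTE; apply: contra qv => /eqP h.
  have e : p = Some p0 by apply: (@W_inj F a hq); rewrite h.
  by rewrite e.
have -> : (W a p == None) = false.
  apply/negbTE; apply: contra qu => /eqP h.
  have e : p = None by apply: (@W_inj F a hq); rewrite h.
  by rewrite e.
by [].
Qed.

Lemma det_step (F : fieldType) (al be ga de b : F) : al * de - be * ga != 0 ->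
  ga * (be - b * de) - de * (al - b * ga) != 0.
Proof.
move=> h; have -> : ga * (be - b * de) - de * (al - b * ga) = - (al * de - be * ga) by ring.
by rewrite oppr_eq0.
Qed.

Definition rhoc (F : finType) (f : {perm F}) (x : F) (n : nat) (p : option F) : option F :=
  match p with
  | None => Some (iter n (f^-1)%g x)
  | Some y => if y == x then None
      else if y \in traject (f^-1)%g ((f^-1)%g x) n then Some (f y) else Some y
  end.
Arguments rhoc {F}.

Lemma memT (F : finType) (h : F -> F) x n y :
  reflect (exists2 j, (j < n)%N & y = iter j.+1 h x) (y \in traject h (h x) n).
Proof.
apply: (iffP trajectP) => -[j hj ->]; exists j => //; by rewrite iterSr.
Qed.

Lemma cyc_inv (F : finFieldType) (f : {perm F}) (x : F) : (2 < #|F|)%N ->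
  forall n, (n < #|porbit f x|)%N ->
  exists (a : seq F) (al be ga de : F), size a = n.+1 /\ al * de - be * ga != 0 /\
    forall p, W a p = mobf al be ga de (rhoc f x n p).
Proof.
move=> hq.
set h := (f^-1)%g.
set s := #|porbit f x|.
have hs : #|porbit h x| = s by apply: eq_card => z; rewrite porbitV.
have U : uniq (traject h x s) by rewrite -hs uniq_traject_porbit.
have inj : forall j k, (j < s)%N -> (k < s)%N -> iter j h x = iter k h x -> j = k.
  move=> j k hj hk e; apply/eqP.
  by rewrite -(nth_uniq x _ _ U) ?size_traject // !nth_traject // e.
have fh : forall z, f (h z) = z by move=> z; rewrite /h permKV.
elim=> [|n IH] hn.
{
  have det0 : (1 : F) * 1 - 0 * 0 != 0 by rewrite mulr1 mul0r subr0 oner_eq0.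
  have hW0 : forall p : option F, W [::] p = mobf 1 0 0 1 (id p).
    by case=> [y|] /=; rewrite ?eqxx // mul0r add0r oner_eq0 mul1r addr0 divr1.
  have := @step F [::] 1 0 0 1 id x hq det0 hW0 isT.
  set b := inv_chain [::] x => hst.
  exists [:: b], 0, 1, (1 - b * 0), (0 - b * 1); split => //; split.
    exact: det_step.
  move=> p; rewrite -[[:: b]]/(rcons [::] b) hst; congr mobf.
  case: p => [y|] //=; rewrite /tau /=.
  }
have hn' : (n < s)%N by lia.
have [a [al [be [ga [de [sz [det hW]]]]]]] := IH hn'.
have e1 : iter n.+1 h x != x.
  by apply/eqP => e; have := inj n.+1 0%N hn (leq_ltn_trans (leq0n _) hn) e.
have e2 : iter n.+1 h x \notin traject h (h x) n.
  apply/memT => -[j hj e]; have := inj _ _ hn _ e; lia.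
have r1 : rhoc f x n (Some (iter n.+1 h x)) = Some (iter n.+1 h x).
  by rewrite /= (negbTE e1) -/h (negbTE e2).
have huv : rhoc f x n None != rhoc f x n (Some (iter n.+1 h x)).
  rewrite r1 /=; apply/eqP => -[e]; have := inj _ _ hn' hn e; lia.
have := @step F a al be ga de (rhoc f x n) (iter n.+1 h x) hq det hW huv.
set b := inv_chain a _ => hst.
exists (rcons a b), ga, de, (al - b * ga), (be - b * de); split.
  by rewrite size_rcons sz.
split; first exact: det_step.
move=> p; rewrite hst; congr mobf; rewrite r1.
case: p => [y|]; last by rewrite /tau /= eqxx.
rewrite /rhoc -/h /tau trajectSr mem_rcons inE -iterSr.
have [yx|yx] := eqVneq y x; first by [].
have [yT|yT] := boolP (y \in traject h (h x) n).
  rewrite orbT.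
  case/memT: (yT) => j hj ey.
  have fy : f y = iter j h x by rewrite ey iterS fh.
  rewrite fy; have -> : (Some (iter j h x) == Some (iter n h x)) = false.
    by apply/eqP => -[e]; have := inj _ _ (ltn_trans hj hn') hn' e; lia.
  have -> : (Some (iter j h x) == Some (iter n.+1 h x)) = false.
    by apply/eqP => -[e]; have := inj _ _ (ltn_trans hj hn') hn e; lia.
  by [].
rewrite orbF.
have [ye|ye] := eqVneq y (iter n.+1 h x).
  rewrite ye eqxx.
  have -> : (Some (iter n.+1 h x) == Some (iter n h x)) = false.
    by apply/eqP => -[e]; have := inj _ _ hn hn' e; lia.
  by rewrite iterS fh.
case: eqP => [[e]|_].
  move: e yT ye.
  case: n {IH hn hn' sz hW huv hst b e1 e2 r1} => [|n] e yT ye.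
    by rewrite e /= eqxx in yx.
  by move: yT; rewrite e; move/memT; case; exists n.
case: eqP => [[e]|_] //.
by rewrite e eqxx in ye.
Qed.

Lemma extract (F : finFieldType) (a : seq F) (al be ga de : F) (g : F -> F) :
  al * de - be * ga != 0 ->
  (forall p, W a p = mobf al be ga de (omap g p)) -> Srep (size a) g.
Proof.
move=> det hW.
have ga0 : ga = 0.
  by have := hW None; rewrite /=; case: eqP => // _.
rewrite ga0 mulr0 subr0 mulf_eq0 negb_or in det; case/andP: det => al0 de0.
exists a, (de / al), (- (be / al)); split => //; split.
  by rewrite mulf_neq0 // invr_eq0.
move=> y; have := hW (Some y); rewrite /= ga0 mul0r add0r (negbTE de0) => -[->].
by field; rewrite al0 de0.
Qed.

Lemma cyc_rep (F : finFieldType) (f : {perm F}) (x : F) : (2 < #|F|)%N ->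
  (1 < #|porbit f x|)%N ->
  Srep (#|porbit f x| + 1) (fun y => if y \in porbit f x then f y else y).
Proof.
move=> hq hs2.
set h := (f^-1)%g.
set s := #|porbit f x|.
have hs : #|porbit h x| = s by apply: eq_card => z; rewrite porbitV.
have U : uniq (traject h x s) by rewrite -hs uniq_traject_porbit.
have inj : forall j k, (j < s)%N -> (k < s)%N -> iter j h x = iter k h x -> j = k.
  move=> j k hj hk e; apply/eqP.
  by rewrite -(nth_uniq x _ _ U) ?size_traject // !nth_traject // e.
have fh : forall z, f (h z) = z by move=> z; rewrite /h permKV.
have itS : iter s h x = x by rewrite -hs iter_porbit.
have memC : forall y, (y \in porbit f x) = (y \in traject h x s).
  by move=> y; rewrite -porbitV -/h porbit_traject hs.
set n := s.-1.
have sn : s = n.+1 by rewrite /n; lia.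
have n1 : (n < s)%N by lia.
have [a [al [be [ga [de [sz [det hW]]]]]]] := @cyc_inv F f x hq n n1.
have huv : rhoc f x n None != rhoc f x n (Some x) by rewrite /= eqxx.
have := @step F a al be ga de (rhoc f x n) x hq det hW huv.
set b := inv_chain a x => hst.
have fx : f x = iter n h x by rewrite -[in LHS]itS sn iterS fh.
have -> : (#|porbit f x| + 1 = size (rcons a b))%N by rewrite size_rcons sz -/s sn; lia.
apply: (@extract F _ _ _ _ _ _ (@det_step _ al be ga de b det)) => p; rewrite hst; congr mobf.
rewrite /= eqxx /tau.
case: p => [y|] /=; first last.
  by rewrite eqxx.
rewrite -/h.
have [yx|yx] := eqVneq y x.
  by rewrite yx /= memC -fx sn /= inE eqxx.
have [yT|yT] := boolP (y \in traject h (h x) n).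
  case/memT: (yT) => j hj ey.
  have fy : f y = iter j h x by rewrite ey iterS fh.
  have -> : y \in porbit f x.
    by rewrite memC; apply/trajectP; exists j.+1; rewrite ?sn // iterS.
  rewrite fy; case: eqP => [[e]|_] //.
  by have := inj _ _ (ltn_trans hj n1) n1 e; lia.
have -> : y \in porbit f x = false.
  apply/negbTE; rewrite memC; apply/negP => /trajectP [j hj ey].
  case: j hj ey => [|j] hj ey; first by rewrite ey eqxx in yx.
  by move: yT; apply/negP/negPn/memT; exists j; [lia | rewrite ey].
case: eqP => [[e]|_] //.
move: yT; rewrite e; case: n {sz hW hst huv fx sn n1 b} e => [|n] e.
  by rewrite /= in e; rewrite e eqxx in yx.
by move=> /negP; case; apply/memT; exists n.
Qed.

Lemma list_rep (F : finFieldType) (f : {perm F}) : (2 < #|F|)%N ->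
  forall L : seq {set F}, uniq L -> {subset L <= nontriv_cycles f} ->
  Srep (\sum_(C <- L) (#|C| + 1))%N
    (fun y => if has (fun C : {set F} => y \in C) L then f y else y).
Proof.
move=> hq; elim=> [|C L IH] /=.
  move=> _ _; rewrite big_nil; apply: Srep_ext (Srep_id F) => y; by [].
case/andP=> CL uL sub.
have sL : {subset L <= nontriv_cycles f} by move=> D hD; apply: sub; rewrite inE hD orbT.
have CN : C \in nontriv_cycles f by apply: sub; rewrite inE eqxx.
move: (CN); rewrite inE => /andP [/imsetP [x0 _ Cx] c2].
rewrite big_cons.
have c2' : (1 < #|porbit f x0|)%N by rewrite -Cx.
have := @Srep_comp F _ _ _ _ hq (@cyc_rep F f x0 hq c2') (IH uL sL).
rewrite -Cx addnC; apply: Srep_ext => y.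
have [yC|yC] := boolP (y \in C).
  have -> : has (fun C0 : {set F} => y \in C0) L = false.
    apply/negbTE/hasPn => D DL; apply/negP => yD.
    have : D \in nontriv_cycles f by apply: sL.
    rewrite inE => /andP [/imsetP [x1 _ Dx] _].
    have e1 : C = porbit f y by apply/eqP; rewrite Cx eq_sym eq_porbit_mem -Cx.
    have e2 : D = porbit f y by apply/eqP; rewrite Dx eq_sym eq_porbit_mem -Dx.
    by move: CL; rewrite e1 -e2 DL.
  by rewrite yC.
rewrite /=.
case: (has _ L); last by rewrite (negbTE yC).
have -> : (f y \in C) = false.
  apply/negbTE; apply: contra yC; rewrite Cx => fyC.
  have : porbit f x0 = porbit f y.
    by apply/eqP; rewrite -(porbit_perm f 1 y) expg1 eq_sym eq_porbit_mem.
  by move=> ->; apply: porbit_id.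
by [].
Qed.

Theorem mainTheorem10 (F : finFieldType) (f : {perm F}) :
  (2 < #|F|)%N -> f != 1%g ->
  let t := #|nontriv_cycles f| in
  let s := (\sum_(C in nontriv_cycles f) #|C|)%N in
  exists (a : seq F) (mu : {poly F}),
    size a = (s + t)%N /\ size mu = 2%N /\
    forall x : F, f x = mu.[inv_chain a x].
Proof.
move=> hq _ t s.
have sub : {subset enum (nontriv_cycles f) <= nontriv_cycles f} by move=> C; rewrite mem_enum.
have := @list_rep F f hq (enum (nontriv_cycles f)) (enum_uniq _) sub.
rewrite big_enum big_split /= sum1_card -/s -/t.
case=> a [al [be [sz [al0 h]]]].
exists a, (al%:P * 'X + be%:P); split => //; split.
  by rewrite size_MXaddC polyC_eq0 (negbTE al0) size_polyC al0.
move=> x; rewrite !hornerE -h.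
case: ifP => // /hasPn hn.
have Pn : porbit f x \notin nontriv_cycles f.
  by rewrite -mem_enum; apply: contraT => /negPn /hn; rewrite porbit_id.
have : (#|porbit f x| <= 1)%N.
  move: Pn; rewrite inE negb_and -leqNgt => /orP [/negP []|//]. by apply: imset_f.
have fxP : f x \in porbit f x by have := mem_porbit f 1 x; rewrite expg1.
move/card_le1_eqP => H; apply: H => //; exact: porbit_id.
Qed.
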